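(* Let $t:\Sigma^*\to\Omega^*$ be a rational partial function with suffix-closed domain $X=\mathrm{dom}(t)$. If the right congruence $\mathcal R_t$ has a critical tuple, then $X$ contains a linear fooling set for $t$.
   Context: For words $x,y$ let $x\wedge y$ be their longest common suffix and $\|x,y\|=|x|+|y|-2|x\wedge y|$. Define $u\mathrel{\mathcal R_t}v$ iff (i) $\{z:uz\in X\}=\{z:vz\in X\}$ and (ii) the set $\{\|t(uw),t(vw)\|: uw,vw\in X\}$ is finite; $\mathcal R_t$ is a right congruence (of finite index since $t$ is rational). A critical tuple in a right congruence $\sim$ is $(u_2,v_2,u,v)$ with $|u_2|=|v_2|\ge1$, $u=u_1u_2$, $v=v_1v_2$ for some $u_1,v_1$, and $u_2w\not\sim v_2w$ for all $w\in\{u,v\}^*$. A linear fooling scheme for $t$ is $(u_2,v_2,u,v,Z)$ with $u_2$ a suffix of $u$, $v_2$ a suffix of $v$, $|u_2|=|v_2|$, $\{u_2,v_2\}\{u,v\}^*Z\subseteq\mathrm{dom}(t)$, and for each $n$ some $z_n\in Z$ with $|z_n|\in O(n)$ and $t(u_2wz_n)\ne t(v_2wz_n)$ for all $w\in\{u,v\}^{\le n}$; $\{u_2,v_2\}\{u,v\}^*Z$ is then a linear fooling set, and $X$ contains one if such a set is a subset of $X$. *)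

(* Defs.v *)
From mathcomp Require Import all_boot.
Set Implicit Arguments. Unset Strict Implicit. Unset Printing Implicit Defensive.

Section Defs.
Variables (Sigma Omega : finType).

Record transducer := Transducer {
  tstate : finType;
  tinit : pred tstate;
  tfin : pred tstate;
  ttrans : seq (tstate * seq Sigma * seq Omega * tstate) }.

Inductive trun (T : transducer) : tstate T -> seq Sigma -> seq Omega -> tstate T -> Prop :=
| trun_nil p : trun p [::] [::] p
| trun_step p a b r u v q :
    (p, a, b, r) \in ttrans T -> trun r u v q -> trun p (a ++ u) (b ++ v) q.

Definition taccepts (T : transducer) (u : seq Sigma) (v : seq Omega) : Prop :=
  exists (p q : tstate T), [/\ tinit p, tfin q & trun p u v q].

Definition rational_fun (t : seq Sigma -> option (seq Omega)) : Prop :=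
  exists T : transducer, forall u v, t u = Some v <-> taccepts T u v.

Definition dom (t : seq Sigma -> option (seq Omega)) (x : seq Sigma) : Prop :=
  t x <> None.

Definition suffix_closed (X : seq Sigma -> Prop) : Prop :=
  forall u z, X (u ++ z) -> X z.

Fixpoint lcp_len {A : eqType} (x y : seq A) : nat :=
  match x, y with
  | a :: x', b :: y' => if a == b then (lcp_len x' y').+1 else 0
  | _, _ => 0
  end.
Definition lcs_len {A : eqType} (x y : seq A) : nat := lcp_len (rev x) (rev y).

Definition wdist {A : eqType} (x y : seq A) : nat :=
  size x + size y - 2 * lcs_len x y.

(** distance lifted to option values (only used on defined values) *)
Definition odist (x y : option (seq Omega)) : nat :=
  match x, y with Some a, Some b => wdist a b | _, _ => 0 end.

(** The right congruence R_t. Condition (ii): the set of distances is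
    finite, i.e. (being a set of naturals) bounded. *)
Definition Rt (t : seq Sigma -> option (seq Omega)) (u v : seq Sigma) : Prop :=
  (forall z, dom t (u ++ z) <-> dom t (v ++ z)) /\
  (exists N, forall w, dom t (u ++ w) -> dom t (v ++ w) ->
                       odist (t (u ++ w)) (t (v ++ w)) <= N).

Definition in_star2 (u v w : seq Sigma) : Prop :=
  exists s : seq bool, w = flatten [seq (if b then u else v) | b <- s].
Definition in_star2_le (n : nat) (u v w : seq Sigma) : Prop :=
  exists s : seq bool, size s <= n /\ w = flatten [seq (if b then u else v) | b <- s].

Definition critical_tuple (sim : seq Sigma -> seq Sigma -> Prop)
  (u2 v2 u v : seq Sigma) : Prop :=
  [/\ size u2 = size v2, 1 <= size u2,
      exists u1, u = u1 ++ u2,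
      exists v1, v = v1 ++ v2
    & forall w, in_star2 u v w -> ~ sim (u2 ++ w) (v2 ++ w)].

Definition linear_fooling_scheme (t : seq Sigma -> option (seq Omega))
  (u2 v2 u v : seq Sigma) (Z : seq Sigma -> Prop) : Prop :=
  [/\ exists u1, u = u1 ++ u2,
      exists v1, v = v1 ++ v2,
      size u2 = size v2,
      (forall w z, in_star2 u v w -> Z z ->
           dom t (u2 ++ w ++ z) /\ dom t (v2 ++ w ++ z))
    & exists C, forall n, exists z, [/\ Z z, size z <= C * n.+1 &
          forall w, in_star2_le n u v w -> t (u2 ++ w ++ z) <> t (v2 ++ w ++ z)]].

End Defs.

(* Main.v *)
Require Import Defs.
From Stdlib Require Import Classical ClassicalEpsilon.
From mathcomp Require Import all_boot zify.
Set Implicit Arguments. Unset Strict Implicit. Unset Printing Implicit Defensive.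

Section Words.
Variable A : eqType.
Implicit Types x y a b X Y : seq A.

Lemma lcp_le_l x y : lcp_len x y <= size x.
Proof. elim: x y => [|c x IH] [|d y] //=; case: ifP => // _; exact: IH. Qed.
Lemma lcp_le_r x y : lcp_len x y <= size y.
Proof. elim: x y => [|c x IH] [|d y] //=; case: ifP => // _; exact: IH. Qed.
Lemma lcp_cat x y x' y' : lcp_len x y <= lcp_len (x ++ x') (y ++ y').
Proof. elim: x y => [|c x IH] [|d y] //=; case: ifP => // _; exact: IH. Qed.
Lemma lcp_conf x y x' y' : lcp_len x y < size x -> lcp_len x y < size y ->
  lcp_len (x ++ x') (y ++ y') = lcp_len x y.
Proof.
elim: x y => [|c x IH] [|d y] //=; case: ifP => // _ H1 H2; by rewrite IH.
Qed.
Lemma lcp_self x y : lcp_len x (x ++ y) = size x.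
Proof. by elim: x => //= c x ->; rewrite eqxx. Qed.

Lemma lcs_le_l x y : lcs_len x y <= size x.
Proof. by rewrite /lcs_len -(size_rev x) lcp_le_l. Qed.
Lemma lcs_le_r x y : lcs_len x y <= size y.
Proof. by rewrite /lcs_len -(size_rev y) lcp_le_r. Qed.
Lemma lcs_cat a b X Y : lcs_len a b <= lcs_len (X ++ a) (Y ++ b).
Proof. by rewrite /lcs_len !rev_cat lcp_cat. Qed.
Definition conflict a b := lcs_len a b < size a /\ lcs_len a b < size b.
Lemma lcs_conf a b X Y : conflict a b -> lcs_len (X ++ a) (Y ++ b) = lcs_len a b.
Proof. move=> [H1 H2]; rewrite /lcs_len !rev_cat lcp_conf //; by rewrite size_rev. Qed.
Lemma conflict_cat a b X Y : conflict a b -> conflict (X ++ a) (Y ++ b).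
Proof. move=> H; have E := lcs_conf X Y H; case: H; rewrite /conflict E !size_cat; lia. Qed.
Lemma lcs_suf a b : lcs_len a (b ++ a) = size a.
Proof. by rewrite /lcs_len rev_cat lcp_self size_rev. Qed.

Lemma wdist_ge_l x y : size x <= wdist x y + size y.
Proof. rewrite /wdist; have := lcs_le_l x y; have := lcs_le_r x y; lia. Qed.
Lemma wdist_ge_r x y : size y <= wdist x y + size x.
Proof. rewrite /wdist; have := lcs_le_l x y; have := lcs_le_r x y; lia. Qed.
Lemma wdist_cat a b X Y : wdist (X ++ a) (Y ++ b) <= size X + size Y + wdist a b.
Proof.
rewrite /wdist !size_cat; have := lcs_cat a b X Y; have := lcs_le_l a b;
have := lcs_le_r a b; lia.
Qed.
Lemma wdist_conf a b X Y : conflict a b -> size X + size Y <= wdist (X ++ a) (Y ++ b).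
Proof.
move=> H; rewrite /wdist !size_cat lcs_conf //; case: H; lia.
Qed.
Lemma wdist_nconf a b : ~ conflict a b -> wdist a b <= (size a - size b) + (size b - size a).
Proof.
rewrite /conflict /wdist => H; have := lcs_le_l a b; have := lcs_le_r a b; lia.
Qed.
Lemma cat_cancelR x y z : x ++ z = y ++ z -> x = y.
Proof.
move=> E; have Hs : size x = size y by move/(f_equal size): E; rewrite !size_cat; lia.
by move/(f_equal (take (size x))): E; rewrite take_size_cat // Hs take_size_cat.
Qed.
Lemma wdist_eq_aux a b X Y : X ++ a = Y ++ b -> size a <= size b ->
  wdist a b <= size X + size Y.
Proof.
move=> E Hab.
have Hs : size X + size a = size Y + size b by move/(f_equal size): E; rewrite !size_cat.
have E' : rev a ++ rev X = rev b ++ rev Y by rewrite -!rev_cat E.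
have Ht : take (size a) (rev b) = rev a.
  move/(f_equal (take (size a))): E'.
  rewrite take_cat size_rev ltnn subnn take0 cats0 take_cat size_rev.
  case: ltnP => H.
  - by move=> <-.
  - have -> : size a = size b by lia.
    by rewrite subnn take0 cats0 -(size_rev b) take_size.
have Hr : rev b = rev a ++ drop (size a) (rev b) by rewrite -{1}(cat_take_drop (size a) (rev b)) Ht.
rewrite /wdist /lcs_len Hr lcp_self size_rev; lia.
Qed.
Lemma wdist_sym a b : wdist a b = wdist b a.
Proof.
rewrite /wdist /lcs_len.
suff -> : lcp_len (rev a) (rev b) = lcp_len (rev b) (rev a) by lia.
elim: (rev a) (rev b) => [|c x IH] [|d y] //=; rewrite eq_sym; case: ifP => // _; by rewrite IH.
Qed.
Lemma wdist_eq a b X Y : X ++ a = Y ++ b -> wdist a b <= size X + size Y.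
Proof.
move=> E; case: (leqP (size a) (size b)) => H; first exact: wdist_eq_aux.
rewrite wdist_sym addnC; apply: wdist_eq_aux; [by rewrite E | exact: ltnW].
Qed.
End Words.

Section Letter.
Variables (Sigma Omega : finType) (T : transducer Sigma Omega).

Definition Kin := (sumn [seq size tr.1.1.2 | tr <- ttrans T]).+1.
Definition cfg : finType := (tstate T + (seq_sub (ttrans T) * 'I_Kin))%type.

Lemma size_in_Kin tr : tr \in ttrans T -> size tr.1.1.2 < Kin.
Proof.
rewrite /Kin ltnS; elim: (ttrans T) => //= tr' s IH; rewrite in_cons => /orP [/eqP ->|/IH]; lia.
Qed.

Definition tsrc (trs : seq_sub (ttrans T)) : tstate T := (ssval trs).1.1.1.
Definition tin (trs : seq_sub (ttrans T)) : seq Sigma := (ssval trs).1.1.2.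
Definition tout (trs : seq_sub (ttrans T)) : seq Omega := (ssval trs).1.2.
Definition tdst (trs : seq_sub (ttrans T)) : tstate T := (ssval trs).2.
Lemma tin_Kin trs : size (tin trs) < Kin.
Proof. exact: (size_in_Kin (ssvalP trs)). Qed.

Inductive lstep : cfg -> seq Sigma -> seq Omega -> cfg -> Prop :=
| LStart (trs : seq_sub (ttrans T)) :
    lstep (inl (tsrc trs)) [::] (tout trs) (inr (trs, ord0))
| LRead trs (k : 'I_Kin) x rest : drop k (tin trs) = x :: rest ->
    lstep (inr (trs, k)) [:: x] [::] (inr (trs, inord k.+1))
| LFin trs (k : 'I_Kin) : drop k (tin trs) = [::] ->
    lstep (inr (trs, k)) [::] [::] (inl (tdst trs)).

Inductive lrun : cfg -> seq Sigma -> seq Omega -> cfg -> Prop :=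
| LNil c : lrun c [::] [::] c
| LCons c x1 o1 c1 x2 o2 c2 : lstep c x1 o1 c1 -> lrun c1 x2 o2 c2 ->
    lrun c (x1 ++ x2) (o1 ++ o2) c2.

Lemma lrun_cat c x o c1 x' o' c2 : lrun c x o c1 -> lrun c1 x' o' c2 ->
  lrun c (x ++ x') (o ++ o') c2.
Proof.
elim => //= {c x o c1} c x1 o1 c1 x2 o2 c3 Hs _ IH H; rewrite -!catA.
by apply: LCons Hs (IH H).
Qed.

Lemma lrun_cons' c x1 o1 c1 x2 o2 c2 x o : lstep c x1 o1 c1 -> lrun c1 x2 o2 c2 ->
  x = x1 ++ x2 -> o = o1 ++ o2 -> lrun c x o c2.
Proof. by move=> H1 H2 -> ->; apply: LCons H1 H2. Qed.

Lemma lrun_step c x o c' : lstep c x o c' -> lrun c x o c'.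
Proof. by move=> H; rewrite -(cats0 x) -(cats0 o); apply: LCons H (LNil _). Qed.

Lemma lrun_split c x y o c' : lrun c (x ++ y) o c' ->
  exists c1 o1 o2, [/\ o = o1 ++ o2, lrun c x o1 c1 & lrun c1 y o2 c'].
Proof.
move Exy : (x ++ y) => xy H; elim: H x y Exy => {c xy o c'}.
  move=> c [|//] [|//] _; exists c, [::], [::]; split => //; exact: LNil.
move=> c x1 o1 c1 x2 o2 c2 Hs Hr IH x y E.
have Hx1 : x1 = [::] \/ exists a, x1 = [:: a] by case: Hs; eauto.
case: Hx1 => [Ex1|[a Ex1]]; subst x1.
  have [c3 [o3 [o4 [-> H1 H2]]]] := IH x y E.
  exists c3, (o1 ++ o3), o4; split; first by rewrite catA.
    by rewrite -[x]/([::] ++ x); apply: LCons Hs H1.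
  done.
case: x E => [|b x] /= E.
  exists c, [::], (o1 ++ o2); split => //; first exact: LNil.
  by rewrite E; apply: LCons Hs Hr.
case: E => -> E.
have [c3 [o3 [o4 [-> H1 H2]]]] := IH x y E.
exists c3, (o1 ++ o3), o4; split; first by rewrite catA.
  by rewrite -cat1s; apply: LCons Hs H1.
done.
Qed.

Lemma readall (trs : seq_sub (ttrans T)) n k : size (tin trs) - k = n ->
  k <= size (tin trs) ->
  lrun (inr (trs, inord k)) (drop k (tin trs)) [::] (inl (tdst trs)).
Proof.
have HK := tin_Kin trs; rewrite /Kin in HK.
elim: n k => [|n IH] k Hn Hk.
  have -> : k = size (tin trs) by lia.
  rewrite drop_size; apply: lrun_step; apply: LFin.
  by rewrite inordK ?drop_size //; lia.
have Hlt : k < size (tin trs) by lia.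
case Ed : (drop k (tin trs)) => [|x rest].
  by move/(f_equal size): Ed; rewrite size_drop /= Hn.
have Er : rest = drop k.+1 (tin trs).
  by rewrite -addn1 addnC -drop_drop Ed drop1.
apply: (lrun_cons' (x2 := rest) (o2 := [::])).
- apply: (@LRead trs (inord k) x rest); by rewrite inordK //; lia.
- rewrite inordK; last lia.
  rewrite Er; apply: IH; lia.
- by [].
- by [].
Qed.

Lemma trun_lrun p x o q : trun p x o q -> lrun (inl p) x o (inl q).
Proof.
elim => {p x o q} [p|p a b r u v q Htr _ IH]; first exact: LNil.
pose trs := SeqSub Htr.
have H1 : lstep (inl p) [::] b (inr (trs, ord0)) by exact: (LStart trs).
have H2 := @readall trs _ 0 erefl (leq0n _).
rewrite drop0 /= in H2.
have H3 : inord 0 = (ord0 : 'I_Kin) by apply: val_inj; rewrite /= inordK.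
rewrite H3 in H2.
apply: (lrun_cons' H1 (lrun_cat H2 IH)) => //.
Qed.

Lemma lrun_trun_gen c x o c' : lrun c x o c' -> forall q, c' = inl q ->
  match c with
  | inl p => trun p x o q
  | inr (trs, k) => exists x', x = drop k (tin trs) ++ x' /\
                               trun (tdst trs) x' o q
  end.
Proof.
elim => {c x o c'} [c q ->|c x1 o1 c1 x2 o2 c2 Hs Hr IH q Eq]; first exact: trun_nil.
have {}IH := IH q Eq.
case: Hs IH => [trs|trs k x rest Ed|trs k Ed] /= IH.
- case: IH => x' [-> H]; rewrite drop0.
  rewrite /tsrc /tin /tout /tdst in H *.
  case: (ssval trs) (ssvalP trs) H => [[[p a] b] r] /= Htr H.
  exact: trun_step Htr H.
- have Hk : k < size (tin trs).
    by move/(f_equal size): Ed; rewrite size_drop /=; lia.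
  have HK := tin_Kin trs; rewrite /Kin in HK.
  move: IH; rewrite inordK; last lia.
  case=> x' [-> H]; exists x'; split => //.
  have Er : drop k.+1 (tin trs) = rest by rewrite -addn1 addnC -drop_drop Ed drop1.
  by rewrite Ed Er.
- by exists x2; rewrite Ed.
Qed.

Lemma lrun_trun p x o q : lrun (inl p) x o (inl q) -> trun p x o q.
Proof. by move=> H; exact: (lrun_trun_gen H erefl). Qed.


Definition pb (P : Prop) : bool := if ClassicalEpsilon.excluded_middle_informative P then true else false.
Lemma pbP (P : Prop) : reflect P (pb P).
Proof. rewrite /pb; case: ClassicalEpsilon.excluded_middle_informative => H; by constructor. Qed.

Definition maxb := sumn [seq size tr.1.2 | tr <- ttrans T].
Lemma out_maxb tr : tr \in ttrans T -> size tr.1.2 <= maxb.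
Proof.
rewrite /maxb; elim: (ttrans T) => //= tr' s IH.
rewrite in_cons => /orP [/eqP ->|/IH]; lia.
Qed.
Lemma tout_maxb trs : size (tout trs) <= maxb.
Proof. exact: (out_maxb (ssvalP trs)). Qed.
Lemma lstep_shape c x o c' : lstep c x o c' -> x = [::] \/ ((exists a, x = [:: a]) /\ o = [::]).
Proof. case; eauto. Qed.
Lemma lstep_out c x o c' : lstep c x o c' -> size o <= maxb.
Proof. case => //= trs; exact: tout_maxb. Qed.

Fixpoint epsk (k : nat) (c : cfg) (o : seq Omega) (c' : cfg) : Prop :=
  match k with
  | 0 => c' = c /\ o = [::]
  | k.+1 => epsk k c o c' \/
      exists c1 o1 o2, [/\ epsk k c o1 c1, lstep c1 [::] o2 c' & o = o1 ++ o2]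
  end.

Lemma epsk_lrun k c o c' : epsk k c o c' -> lrun c [::] o c'.
Proof.
elim: k o c' => [|k IH] o c' /=; first by case=> -> ->; exact: LNil.
case=> [/IH //|[c1 [o1 [o2 [H1 H2 ->]]]]].
by rewrite -[[::]]/([::] ++ [::]); apply: lrun_cat (IH _ _ H1) (lrun_step H2).
Qed.
Lemma epsk_size k c o c' : epsk k c o c' -> size o <= k * maxb.
Proof.
elim: k o c' => [|k IH] o c' /=; first by case=> _ ->.
case=> [H|[c1 [o1 [o2 [H1 H2 ->]]]]]; first by have := IH _ _ H; lia.
rewrite size_cat; have := IH _ _ H1; have := lstep_out H2; lia.
Qed.
Lemma epsk_cons k c o1 c1 o2 c' : lstep c [::] o1 c1 -> epsk k c1 o2 c' ->
  epsk k.+1 c (o1 ++ o2) c'.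
Proof.
move=> Hs; elim: k o2 c' => [|k IH] o2 c' /=.
  case=> -> ->; right; exists c, [::], o1; split => //; by rewrite cats0.
case=> [H|[c2 [o3 [o4 [H1 H2 ->]]]]]; first by left; exact: IH.
right; exists c2, (o1 ++ o3), o4; split => //; [exact: IH | by rewrite catA].
Qed.
Lemma lrun_epsk c o c' : lrun c [::] o c' -> exists k, epsk k c o c'.
Proof.
move Ex : [::] => x H; elim: H Ex => {c x o c'} [c _|c x1 o1 c1 x2 o2 c2 Hs _ IH E].
  by exists 0.
case: x1 E Hs => [|//] /= E Hs; have [k Hk] := IH E.
by exists k.+1; exact: epsk_cons Hs Hk.
Qed.

Definition Rset k c : {set cfg} := [set c' | pb (exists o, epsk k c o c')].
Definition Fstep (S : {set cfg}) : {set cfg} :=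
  S :|: [set c' | pb (exists c1 o, c1 \in S /\ lstep c1 [::] o c')].
Lemma inRset k c c' : (c' \in Rset k c) = pb (exists o, epsk k c o c').
Proof. by rewrite inE. Qed.
Lemma Rset_succ k c : Rset k.+1 c = Fstep (Rset k c).
Proof.
apply/setP => c'; rewrite inRset /Fstep in_setU inRset inE; apply/pbP/orP.
  case=> o [H|[c1 [o1 [o2 [H1 H2 _]]]]].
    by left; apply/pbP; exists o.
  right; apply/pbP; exists c1, o2; split => //; rewrite inRset; apply/pbP; by exists o1.
case=> [/pbP [o1 H1]|/pbP [c1 [o [+ H2]]]]; first by exists o1; left.
rewrite inRset => /pbP [o1 H1].
by exists (o1 ++ o); right; exists c1, o1, o.
Qed.
Lemma Rset_sub k c : Rset k c \subset Rset k.+1 c.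
Proof. by rewrite Rset_succ /Fstep subsetUl. Qed.
Lemma Rset_mono k k' c : k <= k' -> Rset k c \subset Rset k' c.
Proof.
move=> H; rewrite -(subnK H); elim: (k' - k) => // n IH.
by rewrite addSn; apply: subset_trans IH (Rset_sub _ _).
Qed.
Lemma Rset_stab c : exists2 k0, k0 <= #|cfg| & Rset k0 c = Rset k0.+1 c.
Proof.
apply: NNPP => H.
have Hc : forall k, k <= #|cfg| -> k < #|Rset k c|.
  elim=> [_|k IH Hk].
    rewrite card_gt0; apply/set0Pn; exists c; rewrite inRset; apply/pbP; by exists [::].
  have /eqVproper [E|Hp] := Rset_sub k c.
    by exfalso; apply: H; exists k => //; exact: ltnW.
  have := proper_card Hp; have := IH (ltnW Hk); lia.
by move: (Hc _ (leqnn _)); rewrite ltnNge max_card.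
Qed.
Lemma Rset_stab_all c k0 : Rset k0 c = Rset k0.+1 c -> forall j, k0 <= j -> Rset j c = Rset k0 c.
Proof.
move=> E j Hj; rewrite -(subnK Hj); elim: (j - k0) => // n IH.
by rewrite addSn Rset_succ IH -Rset_succ -E.
Qed.

Definition NC := #|cfg| * maxb.
Lemma eps_short c o c' : lrun c [::] o c' ->
  exists o', lrun c [::] o' c' /\ size o' <= NC.
Proof.
move=> /lrun_epsk [k Hk].
have Hin : c' \in Rset k c by rewrite inRset; apply/pbP; exists o.
have [k0 Hk0 E] := Rset_stab c.
have Hin' : c' \in Rset #|cfg| c.
  case: (leqP k #|cfg|) => Hkc.
    exact: (subsetP (Rset_mono c Hkc)).
  rewrite (Rset_stab_all E Hk0); rewrite -(Rset_stab_all E (ltnW (leq_ltn_trans Hk0 Hkc))).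
  done.
move: Hin'; rewrite inRset => /pbP [o' H]; exists o'; split; [exact: epsk_lrun H | exact: (epsk_size H)].
Qed.

Lemma lrun_letter c a o c' : lrun c [:: a] o c' ->
  exists c2 c3 o1 o2, [/\ o = o1 ++ o2, lrun c [::] o1 c2, lstep c2 [:: a] [::] c3
     & lrun c3 [::] o2 c'].
Proof.
move Ex : [:: a] => x H; elim: H Ex => {c x o c'} [//|c x1 o1 c1 x2 o2 c2 Hs Hr IH E].
case: x1 E Hs => [|b [|//]] /= E Hs.
  have [c4 [c5 [o3 [o4 [-> H1 H2 H3]]]]] := IH E.
  exists c4, c5, (o1 ++ o3), o4; split; first by rewrite catA.
  - by rewrite -[[::]]/([::] ++ [::]); apply: LCons Hs H1.
  - done.
  - done.
case: E => Eb Ex2; subst b x2.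
have Ho1 : o1 = [::] by case: (lstep_shape Hs) => [//|[]].
subst o1; exists c, c1, [::], o2; split => //; exact: LNil.
Qed.

Definition Mb := 2 * NC.
Lemma letter_short c a o c' : lrun c [:: a] o c' ->
  exists o', lrun c [:: a] o' c' /\ size o' <= Mb.
Proof.
move=> /lrun_letter [c2 [c3 [o1 [o2 [_ H1 H2 H3]]]]].
have [o1' [H1' S1]] := eps_short H1; have [o2' [H3' S3]] := eps_short H3.
exists (o1' ++ ([::] ++ o2')); split.
  rewrite -[[:: a]]/([::] ++ ([:: a] ++ [::])); apply: lrun_cat H1' _.
  exact: LCons H2 H3'.
rewrite /Mb !size_cat /=; lia.
Qed.
Lemma run_short c x o c' : lrun c x o c' ->
  exists o', lrun c x o' c' /\ size o' <= Mb * (size x).+1.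
Proof.
elim: x c o => [|a x IH] c o.
  move=> /eps_short [o' [H S]]; exists o'; split => //; rewrite /Mb; lia.
rewrite -cat1s => /lrun_split [c1 [o1 [o2 [_ H1 H2]]]].
have [o1' [H1' S1]] := letter_short H1; have [o2' [H2' S2]] := IH _ _ H2.
exists (o1' ++ o2'); split; first exact: lrun_cat H1' H2'.
rewrite size_cat /= mulnS; lia.
Qed.

End Letter.

Section Comb.
Variables (Sigma Omega : eqType) (V : finType).
Definition St := (Sigma * seq Omega * seq Omega * V)%type.
Definition sg (s : St) := s.1.1.2.
Definition sh (s : St) := s.1.2.
Definition sv (s : St) := s.2.
Definition lastv (v : V) (l : seq St) := last v (map sv l).
Definition outg (l : seq St) := flatten (map sg l).
Definition outh (l : seq St) := flatten (map sh l).
Definition sumf (f : St -> nat) (l : seq St) := sumn (map f l).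

Lemma sumf_cat f l1 l2 : sumf f (l1 ++ l2) = sumf f l1 + sumf f l2.
Proof. by rewrite /sumf map_cat sumn_cat. Qed.
Lemma outg_cat l1 l2 : outg (l1 ++ l2) = outg l1 ++ outg l2.
Proof. by rewrite /outg map_cat flatten_cat. Qed.
Lemma outh_cat l1 l2 : outh (l1 ++ l2) = outh l1 ++ outh l2.
Proof. by rewrite /outh map_cat flatten_cat. Qed.
Lemma size_outg l : size (outg l) = sumf (fun s => size (sg s)) l.
Proof. by elim: l => //= s l IH; rewrite size_cat IH. Qed.
Lemma size_outh l : size (outh l) = sumf (fun s => size (sh s)) l.
Proof. by elim: l => //= s l IH; rewrite size_cat IH. Qed.
Lemma lastv_cat v l1 l2 : lastv v (l1 ++ l2) = lastv (lastv v l1) l2.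
Proof. by rewrite /lastv map_cat last_cat. Qed.

Lemma lastocc v l : exists l1 l2, [/\ l = l1 ++ l2, lastv v l1 = v & v \notin map sv l2].
Proof.
elim/last_ind: l => [|l s [l1 [l2 [E1 E2 E3]]]]; first by exists [::], [::].
case: (eqVneq (sv s) v) => Hs.
  exists (rcons l s), [::]; split; first by rewrite cats0.
    by rewrite /lastv map_rcons last_rcons.
  done.
exists l1, (rcons l2 s); split; first by rewrite E1 rcons_cat.
  done.
by rewrite map_rcons mem_rcons in_cons negb_or eq_sym Hs.
Qed.

Lemma jump (f1 f2 : St -> nat) D n : forall (S : {set V}) v l, #|S| <= n -> v \in S ->
  all (fun s => sv s \in S) l -> all (fun s => (f1 s <= D) && (f2 s <= D)) l ->
  (forall l1 l2 l3, l = l1 ++ l2 ++ l3 -> lastv v l1 = lastv v (l1 ++ l2) ->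
      sumf f1 l2 = sumf f2 l2) ->
  sumf f1 l <= sumf f2 l + D * #|S| /\ sumf f2 l <= sumf f1 l + D * #|S|.
Proof.
elim: n => [|n IH] S v l HS Hv Hall HD Hloop.
  by move: HS; rewrite leqn0 => /eqP /cards0_eq HS; rewrite HS inE in Hv.
have [l1 [l2 [E1 E2 E3]]] := lastocc v l.
have H1 : sumf f1 l1 = sumf f2 l1.
  by apply: (Hloop [::] l1 l2) => //.
have HcS := cardsD1 v S; rewrite Hv /= in HcS.
case: l2 E1 E3 => [|s l2] E1 E3.
  rewrite E1 cats0 H1; lia.
have Hl : l = l1 ++ s :: l2 by [].
move: Hall HD; rewrite E1 !all_cat /= => /and3P [_ Hs Hall] /and3P [_ /andP [Hd1 Hd2] HD].
have Hsv : sv s \in S :\ v.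
  by rewrite !inE Hs andbT; move: E3; rewrite /= in_cons negb_or eq_sym => /andP [].
have Hall' : all (fun s => sv s \in S :\ v) l2.
  apply/allP => s' Hs'; rewrite !inE (allP Hall _ Hs') andbT.
  move: E3; rewrite /= in_cons negb_or => /andP [_ H].
  apply/eqP => E; move: H; rewrite -E; by rewrite (map_f sv Hs').
have Hloop' : forall a b c, l2 = a ++ b ++ c -> lastv (sv s) a = lastv (sv s) (a ++ b) ->
    sumf f1 b = sumf f2 b.
  move=> a b c Eabc El; apply: (Hloop (l1 ++ s :: a) b c); first by rewrite Hl Eabc -!catA.
  have E4 : lastv v (s :: a) = lastv (sv s) a by [].
  by rewrite -catA !lastv_cat E2 E4 -lastv_cat.
have HS' : #|S :\ v| <= n by lia.
have [IH1 IH2] := IH (S :\ v) (sv s) l2 HS' Hsv Hall' HD Hloop'.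
have Hc : forall f, sumf f (s :: l2) = f s + sumf f l2 by [].
rewrite !sumf_cat !Hc H1 HcS mulnDr muln1; split; lia.
Qed.

Variable M : nat.
Definition bnd (l : seq St) := all (fun s => (size (sg s) <= M) && (size (sh s) <= M)) l.

Lemma cfind l gf hf :
  (forall l1 l2, l = l1 ++ l2 -> conflict (outg l2 ++ gf) (outh l2 ++ hf)) \/
  ~ conflict (outg l ++ gf) (outh l ++ hf) \/
  exists lp e r2, [/\ l = lp ++ e :: r2,
     (forall a b, lp = a ++ b -> conflict (outg (b ++ e :: r2) ++ gf) (outh (b ++ e :: r2) ++ hf))
   & ~ conflict (outg r2 ++ gf) (outh r2 ++ hf)].
Proof.
elim: l => [|e l IH].
  case: (classic (conflict gf hf)) => H; [left|right; left => //].
  by move=> [|//] [|//] _.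
case: (classic (conflict (outg (e :: l) ++ gf) (outh (e :: l) ++ hf))) => H0; last by right; left.
case: IH => [IH|[IH|[lp [e' [r2 [E1 E2 E3]]]]]].
- left => l1 l2; case: l1 => [/= <- //|e1 l1 [_ E]]; exact: IH E.
- right; right; exists [::], e, l; split => //.
  by move=> [|//] [|//] _.
- right; right; exists (e :: lp), e', r2; split; first by rewrite E1.
  + move=> [|a1 a] b /=.
      by move=> <- /=; rewrite -E1.
    by case=> _ Ea; exact: E2 Ea.
  + done.
Qed.

Lemma wdist_le_size (x y : seq Omega) : wdist x y <= size x + size y.
Proof. rewrite /wdist; lia. Qed.

Lemma core v0 l gf hf : bnd l -> size gf <= M -> size hf <= M ->
  3 * M * #|V|.+1 < wdist (outg l ++ gf) (outh l ++ hf) ->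
  exists l1 l2 l3, [/\ l = l1 ++ l2 ++ l3, l2 <> [::],
     lastv v0 l1 = lastv v0 (l1 ++ l2) &
     size (outg l2) <> size (outh l2) \/
     (conflict (outg l3 ++ gf) (outh l3 ++ hf) /\ 0 < size (outg l2) + size (outh l2))].
Proof.
move=> Hb Hgf Hhf Hw; apply: NNPP => H.
have HA : forall l1 l2 l3, l = l1 ++ l2 ++ l3 -> lastv v0 l1 = lastv v0 (l1 ++ l2) ->
    size (outg l2) = size (outh l2).
  move=> l1 l2 l3 E1 E2; apply: NNPP => Hn; apply: H; exists l1, l2, l3; split => //.
    by move=> E; apply: Hn; rewrite E.
  by left.
have HC : forall l1 l2 l3, l = l1 ++ l2 ++ l3 -> lastv v0 l1 = lastv v0 (l1 ++ l2) ->
    conflict (outg l3 ++ gf) (outh l3 ++ hf) -> size (outg l2) + size (outh l2) = 0.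
  move=> l1 l2 l3 E1 E2 Hc; apply: NNPP => Hn; apply: H; exists l1, l2, l3; split => //.
    by move=> E; apply: Hn; rewrite E.
  right; split => //; lia.
pose fg := fun s : St => size (sg s).
pose fh := fun s : St => size (sh s).
pose fs := fun s : St => size (sg s) + size (sh s).
have HVT : #|[set: V]| = #|V| by rewrite cardsT.
have HbA : forall l', bnd l' -> all (fun s => (fg s <= M) && (fh s <= M)) l' by [].
have HbC : forall l', bnd l' -> all (fun s => (fs s <= 2 * M) && (0 <= 2 * M)) l'.
  move=> l' Hl'; apply/allP => s Hs; move/allP: Hl' => /(_ s Hs) /andP [H1 H2].
  rewrite /fs; apply/andP; split; lia.
have HallT : forall l', all (fun s => sv s \in [set: V]) l' by move=> l'; apply/allP => s _; rewrite inE.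
have sumfs : forall l', sumf fs l' = size (outg l') + size (outh l').
  by move=> l'; rewrite size_outg size_outh /sumf /fs; elim: l' => //= s l' ->; lia.
have sum0 : forall l', sumf (fun _ => 0) l' = 0 by elim => //.
move: Hw.
case: (cfind l gf hf) => [Hall|[Hnc|[lp [e [r2 [E1 E2 E3]]]]]].
-
  have Hlp : forall l1 l2 l3, l = l1 ++ l2 ++ l3 -> lastv v0 l1 = lastv v0 (l1 ++ l2) ->
      sumf fs l2 = sumf (fun _ => 0) l2.
    move=> l1 l2 l3 E El; rewrite sum0 sumfs; apply: (HC l1 l2 l3 E El).
    apply: (Hall (l1 ++ l2)); by rewrite -catA.
  have [J1 _] := @jump fs (fun _ => 0) (2 * M) #|V| [set: V] v0 l (eq_leq HVT) (in_setT _) (HallT l) (HbC l Hb) Hlp.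
  rewrite sumfs sum0 HVT in J1.
  have := wdist_le_size (outg l ++ gf) (outh l ++ hf); rewrite !size_cat.
  nia.
- have Hlp : forall l1 l2 l3, l = l1 ++ l2 ++ l3 -> lastv v0 l1 = lastv v0 (l1 ++ l2) ->
      sumf fg l2 = sumf fh l2.
    move=> l1 l2 l3 E El; rewrite /fg /fh -size_outg -size_outh; exact: (HA l1 l2 l3 E El).
  have [J1 J2] := @jump fg fh M #|V| [set: V] v0 l (eq_leq HVT) (in_setT _) (HallT l) (HbA l Hb) Hlp.
  rewrite /fg /fh -size_outg -size_outh HVT in J1 J2.
  have := wdist_nconf Hnc; rewrite !size_cat.
  nia.
- have Hblp : bnd lp by move: Hb; rewrite /bnd E1 all_cat => /andP [].
  have Hbr2 : bnd r2 by move: Hb; rewrite /bnd E1 all_cat /= => /and3P [].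
  have Hbe : (size (sg e) <= M) && (size (sh e) <= M) by move: Hb; rewrite /bnd E1 all_cat /= => /and3P [].
  have Hlp : forall a b c, lp = a ++ b ++ c -> lastv v0 a = lastv v0 (a ++ b) ->
      sumf fs b = sumf (fun _ => 0) b.
    move=> a b c E El; rewrite sum0 sumfs; apply: (HC a b (c ++ e :: r2)).
    - by rewrite E1 E -!catA.
    - exact: El.
    - apply: (E2 (a ++ b) c); by rewrite E catA.
  have [J1 _] := @jump fs (fun _ => 0) (2 * M) #|V| [set: V] v0 lp (eq_leq HVT) (in_setT _) (HallT lp) (HbC lp Hblp) Hlp.
  rewrite sumfs sum0 HVT in J1.
  have Hr2 : forall a b c, r2 = a ++ b ++ c -> lastv (sv e) a = lastv (sv e) (a ++ b) ->
      sumf fg b = sumf fh b.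
    move=> a b c E El; rewrite /fg /fh -size_outg -size_outh; apply: (HA (lp ++ e :: a) b c).
    - by rewrite E1 E -!catA /=.
    - have E4 : forall X, lastv X (e :: a) = lastv (sv e) a by [].
      by rewrite -catA !lastv_cat !E4 -lastv_cat.
  have [K1 K2] := @jump fg fh M #|V| [set: V] (sv e) r2 (eq_leq HVT) (in_setT _) (HallT r2) (HbA r2 Hbr2) Hr2.
  rewrite /fg /fh -size_outg -size_outh HVT in K1 K2.
  have := wdist_nconf E3; rewrite !size_cat.
  have := wdist_cat (outg r2 ++ gf) (outh r2 ++ hf) (outg lp ++ sg e) (outh lp ++ sh e).
  have -> : (outg lp ++ sg e) ++ outg r2 ++ gf = outg l ++ gf by rewrite E1 outg_cat /= -!catA.
  have -> : (outh lp ++ sh e) ++ outh r2 ++ hf = outh l ++ hf by rewrite E1 outh_cat /= -!catA.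
  rewrite !size_cat.
  move/andP: Hbe => [Hbe1 Hbe2].
  nia.
Qed.

End Comb.

Section Pump.
Variables (Sigma Omega : finType) (T : transducer Sigma Omega).
Notation cfg := (cfg T).
Notation lrun := (@lrun _ _ T).
Definition VV : finType := (cfg * cfg)%type.
Notation St := (St Sigma Omega VV).

Definition sa (s : St) := s.1.1.1.
Definition inp (l : seq St) := map sa l.
Definition edge (v : VV) (s : St) :=
  lrun v.1 [:: sa s] (sg s) (sv s).1 /\ lrun v.2 [:: sa s] (sh s) (sv s).2.
Fixpoint valid (v : VV) (l : seq St) : Prop :=
  match l with [::] => True | s :: l' => edge v s /\ valid (sv s) l' end.

Lemma valid_cat v l1 l2 : valid v (l1 ++ l2) <-> valid v l1 /\ valid (lastv v l1) l2.
Proof.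
elim: l1 v => [|s l1 IH] v /=; first by split => [H|[]].
rewrite IH; split; [case=> H1 [H2 H3]; split; [split|]; assumption|case=> [[H1 H2] H3]; split; [|split]; assumption].
Qed.
Lemma valid_run v l : valid v l ->
  lrun v.1 (inp l) (outg l) (lastv v l).1 /\ lrun v.2 (inp l) (outh l) (lastv v l).2.
Proof.
elim: l v => [|s l IH] v /=; first by split; exact: LNil.
case=> [[E1 E2] /IH [H1 H2]]; split.
- by rewrite -cat1s; exact: lrun_cat E1 H1.
- by rewrite -cat1s; exact: lrun_cat E2 H2.
Qed.
Lemma valid_rep w l2 m : valid w l2 -> lastv w l2 = w ->
  valid w (flatten (nseq m l2)) /\ lastv w (flatten (nseq m l2)) = w.
Proof.
move=> Hv Hl; elim: m => [|m [IH1 IH2]] //=.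
rewrite lastv_cat Hl IH2; split => //; apply/valid_cat; by rewrite Hl.
Qed.
Lemma size_outg_rep (l2 : seq St) m : size (outg (flatten (nseq m l2))) = m * size (outg l2).
Proof. by elim: m => //= m IH; rewrite outg_cat size_cat IH mulSn. Qed.
Lemma size_outh_rep (l2 : seq St) m : size (outh (flatten (nseq m l2))) = m * size (outh l2).
Proof. by elim: m => //= m IH; rewrite outh_cat size_cat IH mulSn. Qed.
Lemma size_inp_rep (l2 : seq St) m : size (inp (flatten (nseq m l2))) = m * size l2.
Proof. by elim: m => //= m IH; rewrite /inp map_cat size_cat -/(inp _) IH size_map mulSn. Qed.

Notation Mb := (Mb T).
Lemma NC_Mb : NC T <= Mb. Proof. rewrite /Mb; lia. Qed.

Lemma build z : forall c d g h e e', lrun c z g e -> lrun d z h e' ->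
  exists l gf hf, [/\ valid (c, d) l, inp l = z, bnd Mb l,
     lrun (lastv (c, d) l).1 [::] gf e /\ lrun (lastv (c, d) l).2 [::] hf e'
   & size gf <= Mb /\ size hf <= Mb].
Proof.
elim: z => [|a z IH] c d g h e e' H1 H2.
  have [g' [G1 G2]] := eps_short H1; have [h' [K1 K2]] := eps_short H2.
  exists [::], g', h'; split => //; split; apply: leq_trans NC_Mb; done.
move: H1 H2; rewrite -cat1s => /lrun_split [c1 [g1 [g2 [_ G1 G2]]]] /lrun_split [d1 [h1 [h2 [_ K1 K2]]]].
have [g1' [G1' S1]] := letter_short G1; have [h1' [K1' S2]] := letter_short K1.
have [l [gf [hf [V1 V2 V3 V4 V5]]]] := IH _ _ _ _ _ _ G2 K2.
exists ((a, g1', h1', (c1, d1)) :: l), gf, hf; split.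
- split; [split; [exact: G1' | exact: K1'] | exact: V1].
- by rewrite -V2.
- rewrite /bnd /= S1 S2 /=; exact: V3.
- exact: V4.
- exact: V5.
Qed.

Variable Fc : cfg -> Prop.

Lemma pump c d :
  (forall z g g' e e', Fc e -> Fc e' -> lrun c z g e -> lrun c z g' e' -> g = g') ->
  (forall z h h' e e', Fc e -> Fc e' -> lrun d z h e -> lrun d z h' e' -> h = h') ->
  (forall N, exists z g h e e', [/\ Fc e, Fc e', lrun c z g e, lrun d z h e' & N < wdist g h]) ->
  exists K0, forall k, exists z g h e e', [/\ Fc e, Fc e', lrun c z g e, lrun d z h e' &
      size z <= K0 * k.+1 /\ k <= wdist g h].
Proof.
move=> Uc Ud Div.
have [z [g [h [e [e' [F1 F2 R1 R2 Hw]]]]]] := Div (3 * Mb * #|VV|.+1).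
have [l [gf [hf [V1 V2 V3 [V4 V5] [V6 V7]]]]] := build R1 R2.
have [W1 W2] := valid_run V1.
have Eg : outg l ++ gf = g.
  apply: (Uc z _ _ e e F1 F1 _ R1); rewrite -V2 -[inp l]cats0; exact: lrun_cat W1 V4.
have Eh : outh l ++ hf = h.
  apply: (Ud z _ _ e' e' F2 F2 _ R2); rewrite -V2 -[inp l]cats0; exact: lrun_cat W2 V5.
rewrite -Eg -Eh in Hw.
have [l1 [l2 [l3 [E1 E2 E3 E4]]]] := @core _ _ VV Mb (c, d) l gf hf V3 V6 V7 Hw.
pose c0 := size (outg l ++ gf) + size (outh l ++ hf).
exists (c0.+1 * size l) => k.
pose m := k + c0.
pose lm := l1 ++ flatten (nseq m l2) ++ l3.
move: V1; rewrite E1 => /valid_cat [P1 /valid_cat [P2 P3]].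
rewrite -lastv_cat in P3.
have [Q1 Q2] := valid_rep m P2 (etrans (esym (lastv_cat _ _ _)) (esym E3)).
have Vm : valid (c, d) lm.
  apply/valid_cat; split => //; apply/valid_cat; split => //.
  by rewrite Q2 E3.
have Lm : lastv (c, d) lm = lastv (c, d) l.
  by rewrite /lm E1 !lastv_cat Q2 {1}E3 lastv_cat.
have [M1 M2] := valid_run Vm; rewrite Lm in M1 M2.
exists (inp lm ++ [::]), (outg lm ++ gf), (outh lm ++ hf), e, e'; split => //.
- exact: lrun_cat M1 V4.
- exact: lrun_cat M2 V5.
have Hl2 : 0 < size l2 by move: E2; case: (l2) => // ? ?.
split.
  rewrite cats0 /lm /inp !map_cat !size_cat -!/(inp _) size_inp_rep !size_map.
  have : size l = size l1 + size l2 + size l3 by rewrite E1 !size_cat addnA.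
  rewrite /m; nia.
have Hs1 : size (outg lm ++ gf) = size (outg l1) + m * size (outg l2) + size (outg l3) + size gf.
  by rewrite /lm !outg_cat !size_cat size_outg_rep !addnA.
have Hs2 : size (outh lm ++ hf) = size (outh l1) + m * size (outh l2) + size (outh l3) + size hf.
  by rewrite /lm !outh_cat !size_cat size_outh_rep !addnA.
have Hc0 : c0 = size (outg l1) + size (outg l2) + size (outg l3) + size gf +
               (size (outh l1) + size (outh l2) + size (outh l3) + size hf).
  rewrite /c0 E1 !outg_cat !outh_cat !size_cat. move: (size (outg l1)) (size (outg l2)) (size (outg l3)) (size gf) (size (outh l1)) (size (outh l2)) (size (outh l3)) (size hf) => *. lia.
suff : m <= wdist (outg lm ++ gf) (outh lm ++ hf) + c0 by rewrite /m; lia.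
case: E4 => [Hne|[Hcf Hpos]].
- have G1 := wdist_ge_l (outg lm ++ gf) (outh lm ++ hf).
  have G2 := wdist_ge_r (outg lm ++ gf) (outh lm ++ hf).
  rewrite Hs1 Hs2 in G1 G2.
  case: (ltngtP (size (outg l2)) (size (outh l2))) => Hlt; last by [].
  + have : m * (size (outg l2)).+1 <= m * size (outh l2) by rewrite leq_mul2l Hlt orbT.
    rewrite mulnS; nia.
  + have : m * (size (outh l2)).+1 <= m * size (outg l2) by rewrite leq_mul2l Hlt orbT.
    rewrite mulnS; nia.
- have Hwc : size (outg l1 ++ outg (flatten (nseq m l2))) + size (outh l1 ++ outh (flatten (nseq m l2)))
      <= wdist (outg lm ++ gf) (outh lm ++ hf).
    have := wdist_conf (outg l1 ++ outg (flatten (nseq m l2))) (outh l1 ++ outh (flatten (nseq m l2))) Hcf.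
    by rewrite /lm !outg_cat !outh_cat !catA.
  rewrite !size_cat size_outg_rep size_outh_rep in Hwc.
  have : m * 1 <= m * (size (outg l2) + size (outh l2)) by rewrite leq_mul2l Hpos orbT.
  nia.
Qed.

End Pump.

Section Star.
Variable A : finType.
Implicit Types u v w x y P E : seq A.
Lemma star_nil u v : in_star2 u v [::].
Proof. by exists [::]. Qed.
Lemma star_u u v : in_star2 u v u.
Proof. by exists [:: true]; rewrite /= cats0. Qed.
Lemma star_v u v : in_star2 u v v.
Proof. by exists [:: false]; rewrite /= cats0. Qed.
Lemma star_cat u v x y : in_star2 u v x -> in_star2 u v y -> in_star2 u v (x ++ y).
Proof. by move=> [s1 ->] [s2 ->]; exists (s1 ++ s2); rewrite map_cat flatten_cat. Qed.
Lemma star_sub u v P E w : in_star2 u v P -> in_star2 u v E -> in_star2 P E w -> in_star2 u v w.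
Proof.
move=> HP HE [s ->]; elim: s => [|b s IH] /=; first exact: star_nil.
by apply: star_cat => //; case: b.
Qed.
Lemma star_le_star n u v w : in_star2_le n u v w -> in_star2 u v w.
Proof. by move=> [s [_ ->]]; exists s. Qed.
Lemma star_le_size n u v w : in_star2_le n u v w -> size w <= n * (size u + size v).
Proof.
move=> [s [Hs ->]]; apply: leq_trans (leq_mul Hs (leqnn _)).
elim: s {Hs} => //= b s IH; rewrite size_cat mulSn; case: b; lia.
Qed.
Definition pw k x := flatten (nseq k x).
Lemma pw_add a b x : pw (a + b) x = pw a x ++ pw b x.
Proof. by rewrite /pw; elim: a => //= a IH; rewrite IH catA. Qed.
Lemma pw_succ k x : pw k.+1 x = pw k x ++ x.
Proof. by rewrite -addn1 pw_add /pw /= cats0. Qed.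
Lemma star_pw u v k x : in_star2 u v x -> in_star2 u v (pw k x).
Proof. move=> H; rewrite /pw; elim: k => /= [|k IH]; [exact: star_nil | exact: star_cat]. Qed.
End Star.

Section Main.
Variables (Sigma Omega : finType) (T : transducer Sigma Omega).
Variable t : seq Sigma -> option (seq Omega).
Hypothesis HT : forall u v, t u = Some v <-> taccepts T u v.
Notation cfg := (cfg T).
Notation lrun := (@lrun _ _ T).

Definition Ic (c : cfg) := exists p, c = inl p /\ tinit p.
Definition Fc (c : cfg) := exists q, c = inl q /\ tfin q.

Lemma t_run x o : t x = Some o <-> exists c0 cf, [/\ Ic c0, Fc cf & lrun c0 x o cf].
Proof.
rewrite HT; split.
  case=> p [q [H1 H2 H3]]; exists (inl p), (inl q); split; [by exists p|by exists q|exact: trun_lrun].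
case=> _ [_ [[p [-> H1]] [q [-> H2]] H3]]; exists p, q; split => //; exact: lrun_trun.
Qed.
Lemma t_dom x : dom t x <-> exists o c0 cf, [/\ Ic c0, Fc cf & lrun c0 x o cf].
Proof.
rewrite /dom; split.
  case E : (t x) => [o|//] _; have [c0 [cf H]] := (t_run x o).1 E; by exists o, c0, cf.
by case=> o [c0 [cf H]]; rewrite ((t_run x o).2 (ex_intro _ c0 (ex_intro _ cf H))).
Qed.

Definition rho (x : seq Sigma) : {set cfg * cfg} := [set cc | pb (exists o, lrun cc.1 x o cc.2)].
Lemma rhoP x c c' : (exists o, lrun c x o c') <-> (c, c') \in rho x.
Proof. by rewrite inE; split => [H|/pbP //]; apply/pbP. Qed.

Lemma rho_cong_aux x x' y w c c' : rho x = rho x' ->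
  (exists o, lrun c (y ++ x ++ w) o c') -> exists o, lrun c (y ++ x' ++ w) o c'.
Proof.
move=> E [o /lrun_split [c1 [o1 [o2 [_ H1 /lrun_split [c2 [o3 [o4 [_ H2 H3]]]]]]]]].
have : (c1, c2) \in rho x' by rewrite -E; apply/rhoP; exists o3.
move/rhoP => [o5 H5]; exists (o1 ++ o5 ++ o4); apply: lrun_cat H1 _; exact: lrun_cat H5 H3.
Qed.
Lemma rho_cong x x' y w : rho x = rho x' -> rho (y ++ x ++ w) = rho (y ++ x' ++ w).
Proof.
move=> E; apply/setP => [[c c']]; apply/idP/idP => /rhoP H; apply/rhoP.
- exact: rho_cong_aux E H.
- exact: rho_cong_aux (esym E) H.
Qed.
Lemma rho_congl x x' y : rho x = rho x' -> rho (y ++ x) = rho (y ++ x').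
Proof. by move=> E; have := rho_cong y [::] E; rewrite !cats0. Qed.

Lemma dom_cong x x' y z : rho x = rho x' -> dom t (y ++ x ++ z) -> dom t (y ++ x' ++ z).
Proof.
move=> E /t_dom [o [c0 [cf [H1 H2 H3]]]]; apply/t_dom.
have [o' H'] := @rho_cong_aux x x' y z c0 cf E (ex_intro _ o H3).
by exists o', c0, cf.
Qed.

Lemma rho_idem x : exists2 k, 0 < k & rho (pw k x ++ pw k x) = rho (pw k x).
Proof.
pose f := fun i : 'I_(#|{set cfg * cfg}|.+1) => rho (pw i x).
have [i [j [Hij Ef]]] : exists i j : 'I_(#|{set cfg * cfg}|.+1), i < j /\ f i = f j.
  apply: NNPP => Hn.
  have Hinj : injective f.
    move=> i j Eij; apply: val_inj; apply/eqP; apply: NNPP => Hne.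
    case: (ltngtP i j) => Hlt; last by apply: Hne; apply/eqP.
    + by apply: Hn; exists i, j.
    + by apply: Hn; exists j, i.
  by have := leq_card f Hinj; rewrite card_ord ltnn.
rewrite /f in Ef.
pose p := j - i.
have Hn : forall n, rho (pw (i + n) x) = rho (pw (j + n) x).
  by move=> n; rewrite !pw_add; apply: (rho_cong [::] _ Ef).
have Hq : forall q n, rho (pw (i + n + q * p) x) = rho (pw (i + n) x).
  elim=> [|q IH] n; first by rewrite addn0.
  have -> : i + n + q.+1 * p = j + (n + q * p) by rewrite /p mulSn; lia.
  by rewrite -Hn addnA IH.
exists (p * i.+1); first by rewrite /p muln_gt0; lia.
have := Hq i.+1 (p * i.+1 - i).
rewrite -pw_add.
have -> : i + (p * i.+1 - i) + i.+1 * p = p * i.+1 + p * i.+1.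
  have : i < p * i.+1 by rewrite /p; nia.
  lia.
have -> : i + (p * i.+1 - i) = p * i.+1.
  have : i < p * i.+1 by rewrite /p; nia.
  lia.
done.
Qed.

Lemma cat_cancelL (s a b : seq Omega) : s ++ a = s ++ b -> a = b.
Proof. by move/(f_equal (drop (size s))); rewrite !drop_size_cat. Qed.

Lemma pig (X : finType) (Pp : nat -> X -> Prop) :
  (forall N N' x, N' <= N -> Pp N x -> Pp N' x) -> (forall N, exists x, Pp N x) ->
  exists x, forall N, Pp N x.
Proof.
move=> Hmono Hall.
suff : forall s : seq X, (forall N, exists2 x, x \in s & Pp N x) -> exists2 x, x \in s & forall N, Pp N x.
  move=> /(_ (enum X)) H; case: H => [N|x _ Hx]; last by exists x.
  by have [x Hx] := Hall N; exists x; rewrite ?mem_enum.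
elim=> [|y s IH] H; first by case: (H 0).
case: (classic (forall N, Pp N y)) => Hy; first by exists y; rewrite ?mem_head.
move: Hy => /not_all_ex_not [N0 HN0].
case: IH => [N|x Hx1 Hx2]; last by exists x; rewrite // in_cons Hx1 orbT.
case: (H (maxn N N0)) => x; rewrite in_cons => /orP [/eqP ->|Hx] HP.
  by exfalso; apply: HN0; apply: Hmono HP; apply: leq_maxr.
by exists x => //; apply: Hmono HP; apply: leq_maxl.
Qed.


Lemma main_T : suffix_closed (dom t) ->
  (exists u2 v2 u v, critical_tuple (Rt t) u2 v2 u v) ->
  exists u2 v2 u v (Z : seq Sigma -> Prop), linear_fooling_scheme t u2 v2 u v Z.
Proof.
move=> Hsuf [u2 [v2 [u [v [Hsz Hsz1 [u1 Hu] [v1 Hv] Hcrit]]]]].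
have [k Hk0 Hk] := rho_idem u.
pose P := pw k u.
have [m Hm0 Hm] := rho_idem (P ++ v).
pose E := pw m (P ++ v).
have EP : P = (pw k.-1 u ++ u1) ++ u2 by rewrite /P -(prednK Hk0) pw_succ Hu catA.
have EE : E = (pw m.-1 (P ++ v) ++ P ++ v1) ++ v2 by rewrite /E -(prednK Hm0) pw_succ Hv !catA.
have EE2 : E = (P ++ v) ++ pw m.-1 (P ++ v).
  by rewrite /E -(prednK Hm0) -add1n pw_add {1}/pw /= cats0.
have HPE : rho (P ++ E) = rho E.
  have H := rho_cong [::] (v ++ pw m.-1 (P ++ v)) Hk.
  by rewrite EE2 -!catA; rewrite /= -!catA in H.
have HwE : forall w, in_star2 P E w -> rho (w ++ E) = rho E.
  move=> w [s ->]; elim: s => [|b s IH] //=.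
  by rewrite -catA (rho_congl (if b then P else E) IH); case: b.
have HPs : in_star2 u v P := star_pw k (star_u u v).
have HEs : in_star2 u v E := star_pw m (star_cat HPs (star_v u v)).
have Hdom : forall z, dom t ((u2 ++ E) ++ z) <-> dom t ((v2 ++ E) ++ z).
  move=> z; split => H.
  - rewrite -catA in H.
    have H1 : dom t (u2 ++ (E ++ E) ++ z) by apply: (dom_cong (esym Hm)).
    have E1 : u2 ++ (E ++ E) ++ z = (u2 ++ (pw m.-1 (P ++ v) ++ P ++ v1)) ++ (v2 ++ E ++ z).
      by rewrite {1}EE !catA.
    rewrite E1 in H1; rewrite -catA; exact: Hsuf H1.
  - rewrite -catA in H.
    have H1 : dom t (v2 ++ (P ++ E) ++ z) by apply: (dom_cong (esym HPE)).
    have E1 : v2 ++ (P ++ E) ++ z = (v2 ++ (pw k.-1 u ++ u1)) ++ (u2 ++ E ++ z).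
      by rewrite {1}EP !catA.
    rewrite E1 in H1; rewrite -catA; exact: Hsuf H1.
have Hnb : forall N, exists w, [/\ dom t ((u2 ++ E) ++ w), dom t ((v2 ++ E) ++ w) &
    N < odist (t ((u2 ++ E) ++ w)) (t ((v2 ++ E) ++ w))].
  move=> N; apply: NNPP => Hn; apply: (Hcrit E HEs); split; first exact: Hdom.
  exists N => w H1 H2; apply: NNPP => Hlt; apply: Hn; exists w; split => //.
  by rewrite ltnNge; apply/negP.
pose Pp := fun N (cc : cfg * cfg) => exists w a b g h c0 d0 e e',
  [/\ Ic c0 /\ Ic d0, Fc e /\ Fc e', lrun c0 (u2 ++ E) a cc.1 /\ lrun cc.1 w g e,
      lrun d0 (v2 ++ E) b cc.2 /\ lrun cc.2 w h e' & N < wdist (a ++ g) (b ++ h)].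
have [[c d] Hcd] : exists cc, forall N, Pp N cc.
  apply: pig.
    move=> N N' cc HN [w [a [b [g [h [c0 [d0 [e [e' [H1 H2 H3 H4 H5]]]]]]]]]].
    exists w, a, b, g, h, c0, d0, e, e'; split => //; exact: leq_ltn_trans HN H5.
  move=> N; have [w [H1 H2 Hlt]] := Hnb N.
  case Et1 : (t ((u2 ++ E) ++ w)) H1 Hlt => [o1|//] _.
  case Et2 : (t ((v2 ++ E) ++ w)) H2 => [o2|//] _ /= Hlt.
  have [c0 [e [I1 F1 /lrun_split [c1 [a [g [Eo1 R1 R2]]]]]]] := (t_run _ _).1 Et1.
  have [d0 [e' [I2 F2 /lrun_split [d1 [b [h [Eo2 R3 R4]]]]]]] := (t_run _ _).1 Et2.
  exists (c1, d1), w, a, b, g, h, c0, d0, e, e'; split => //; by rewrite -Eo1 -Eo2.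
have [w0 [a0 [b0 [g0 [h0 [c0 [d0 [e0 [e0' [[Ic0 Id0] [Fe0 Fe0'] [Ra0 Rg0] [Rb0 Rh0] _]]]]]]]]]] := Hcd 0.
have Uc : forall z g g' e e', Fc e -> Fc e' -> lrun c z g e -> lrun c z g' e' -> g = g'.
  move=> z g g' e e' F1 F2 R1 R2.
  have T1 : t ((u2 ++ E) ++ z) = Some (a0 ++ g).
    by apply/t_run; exists c0, e; split => //; exact: lrun_cat Ra0 R1.
  have T2 : t ((u2 ++ E) ++ z) = Some (a0 ++ g').
    by apply/t_run; exists c0, e'; split => //; exact: lrun_cat Ra0 R2.
  by rewrite T1 in T2; case: T2 => /cat_cancelL.
have Ud : forall z h h' e e', Fc e -> Fc e' -> lrun d z h e -> lrun d z h' e' -> h = h'.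
  move=> z h h' e e' F1 F2 R1 R2.
  have T1 : t ((v2 ++ E) ++ z) = Some (b0 ++ h).
    by apply/t_run; exists d0, e; split => //; exact: lrun_cat Rb0 R1.
  have T2 : t ((v2 ++ E) ++ z) = Some (b0 ++ h').
    by apply/t_run; exists d0, e'; split => //; exact: lrun_cat Rb0 R2.
  by rewrite T1 in T2; case: T2 => /cat_cancelL.
have Div : forall N, exists z g h e e', [/\ Fc e, Fc e', lrun c z g e, lrun d z h e' & N < wdist g h].
  move=> N.
  have [w [a [b [g [h [c1 [d1 [e [e' [[I1 I2] [F1 F2] [Ra Rg] [Rb Rh] Hlt]]]]]]]]]] :=
    Hcd (N + size a0 + size b0).
  have Ea : a = a0.
    have T1 : t ((u2 ++ E) ++ w) = Some (a ++ g).
      by apply/t_run; exists c1, e; split => //; exact: lrun_cat Ra Rg.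
    have T2 : t ((u2 ++ E) ++ w) = Some (a0 ++ g).
      by apply/t_run; exists c0, e; split => //; exact: lrun_cat Ra0 Rg.
    by rewrite T1 in T2; case: T2 => /cat_cancelR.
  have Eb : b = b0.
    have T1 : t ((v2 ++ E) ++ w) = Some (b ++ h).
      by apply/t_run; exists d1, e'; split => //; exact: lrun_cat Rb Rh.
    have T2 : t ((v2 ++ E) ++ w) = Some (b0 ++ h).
      by apply/t_run; exists d0, e'; split => //; exact: lrun_cat Rb0 Rh.
    by rewrite T1 in T2; case: T2 => /cat_cancelR.
  subst a b; exists w, g, h, e, e'; split => //.
  have H : wdist (a0 ++ g) (b0 ++ h) <= size a0 + size b0 + wdist g h := wdist_cat g h a0 b0.
  lia.
have [K0 HK0] := @pump _ _ T Fc c d Uc Ud Div.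
have Rc : forall w, in_star2 P E w -> exists c1 a,
    [/\ Ic c1, lrun c1 (u2 ++ w ++ E) a c & size a <= Mb T * (size (u2 ++ w ++ E)).+1].
  move=> w Hw; move: Ra0 => /lrun_split [c2 [a1 [a2 [_ R1 R2]]]].
  have : (c2, c) \in rho (w ++ E) by rewrite HwE //; apply/rhoP; exists a2.
  move/rhoP => [a3 R3]; have [a' [R' S']] := run_short (lrun_cat R1 R3).
  by exists c0, a'.
have Rd : forall w, in_star2 P E w -> exists d1 b,
    [/\ Ic d1, lrun d1 (v2 ++ w ++ E) b d & size b <= Mb T * (size (v2 ++ w ++ E)).+1].
  move=> w Hw; move: Rb0 => /lrun_split [c2 [a1 [a2 [_ R1 R2]]]].
  have : (c2, d) \in rho (w ++ E) by rewrite HwE //; apply/rhoP; exists a2.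
  move/rhoP => [a3 R3]; have [a' [R' S']] := run_short (lrun_cat R1 R3).
  by exists d0, a'.
exists u2, v2, P, E, (fun z => exists z', [/\ z = E ++ z', (exists g e, Fc e /\ lrun c z' g e)
                                        & (exists h e', Fc e' /\ lrun d z' h e')]).
split.
- by exists (pw k.-1 u ++ u1).
- by exists (pw m.-1 (P ++ v) ++ P ++ v1).
- exact: Hsz.
- move=> w z Hw [z' [-> [g [e [F1 R1]]] [h [e' [F2 R2]]]]].
  have [c1 [a [I1 Ra S1]]] := Rc w Hw; have [d1 [b [I2 Rb S2]]] := Rd w Hw.
  split; apply/t_dom.
  + exists (a ++ g), c1, e; split => //; have := lrun_cat Ra R1; by rewrite -!catA.
  + exists (b ++ h), d1, e'; split => //; have := lrun_cat Rb R2; by rewrite -!catA.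
- pose Ln := fun n => size u2 + n * (size P + size E) + size E.
  pose kn := fun n => 2 * (Mb T * (Ln n).+1) + 1.
  pose A := 2 * Mb T * (size u2 + size P + size E + size E + 1) + 2.
  exists (size E + K0 * A) => n.
  have [z' [g [h [e [e' [F1 F2 R1 R2 [Sz Hwd]]]]]]] := HK0 (kn n).
  exists (E ++ z'); split.
  + exists z'; split => //; [by exists g, e | by exists h, e'].
  + have Hk1 : (kn n).+1 <= n.+1 * A by rewrite /kn /Ln /A; nia.
    have Hk2 : K0 * (kn n).+1 <= K0 * (n.+1 * A) by rewrite leq_mul2l Hk1 orbT.
    rewrite size_cat; nia.
  + move=> w Hwle Heq.
    have Hw := star_le_star Hwle; have Hsw := star_le_size Hwle.
    have [c1 [a [I1 Ra S1]]] := Rc w Hw; have [d1 [b [I2 Rb S2]]] := Rd w Hw.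
    have T1 : t (u2 ++ w ++ E ++ z') = Some (a ++ g).
      apply/t_run; exists c1, e; split => //; have := lrun_cat Ra R1; by rewrite -!catA.
    have T2 : t (v2 ++ w ++ E ++ z') = Some (b ++ h).
      apply/t_run; exists d1, e'; split => //; have := lrun_cat Rb R2; by rewrite -!catA.
    rewrite T1 T2 in Heq; case: Heq => Eab.
    have Hle : wdist g h <= size a + size b := wdist_eq Eab.
    have Hs1 : (size (u2 ++ w ++ E)).+1 <= (Ln n).+1 by rewrite /Ln !size_cat; lia.
    have Hs2 : (size (v2 ++ w ++ E)).+1 <= (Ln n).+1 by rewrite /Ln !size_cat -Hsz; lia.
    have H1 : Mb T * (size (u2 ++ w ++ E)).+1 <= Mb T * (Ln n).+1 by rewrite leq_mul2l Hs1 orbT.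
    have H2 : Mb T * (size (v2 ++ w ++ E)).+1 <= Mb T * (Ln n).+1 by rewrite leq_mul2l Hs2 orbT.
    move: Hwd; rewrite /kn; lia.
Qed.

End Main.

Theorem proposition22 (Sigma Omega : finType)
  (t : seq Sigma -> option (seq Omega)) :
  rational_fun t ->
  suffix_closed (dom t) ->
  (exists u2 v2 u v, critical_tuple (Rt t) u2 v2 u v) ->
  exists u2 v2 u v (Z : seq Sigma -> Prop),
    linear_fooling_scheme t u2 v2 u v Z.
Proof. by move=> [T HT]; exact: main_T HT. Qed.
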